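(* Let $\mathbb{X},\mathbb{X}'\subseteq\mathbb{P}^{k-1}$ be sets of $n\ge2$ $\mathbb{F}_q$-rational points each, let $L,L'\in P_1$ be linear forms with $L$ vanishing at no point of $\mathbb{X}$ and $L'$ vanishing at no point of $\mathbb{X}'$, and let $\Phi_{\mathbb{X}}$ (built with $L$) and $\Phi_{\mathbb{X}'}$ (built with $L'$) be Macaulay inverse polynomials. Let $A\in\mathrm{GL}_k(\mathbb{F}_q)$ satisfy $\lambda_A(L)=L'$. If $\Lambda_A(\mathbb{X})=\mathbb{X}'$, then $r_{\mathbb{X}}=r_{\mathbb{X}'}$ and there is $c\in\mathbb{F}_q\setminus\{0\}$ such that $\Phi_{\mathbb{X}'}(\lambda_A(g))=c\,\Phi_{\mathbb{X}}(g)$ for all $g\in P_{2r_{\mathbb{X}}-1}$.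
   Context: $P=\mathbb{F}_q[x_1,\dots,x_k]$ standard graded. For a set $\mathbb{X}=\{p_1,\dots,p_n\}$ of distinct $\mathbb{F}_q$-rational points of $\mathbb{P}^{k-1}$: $R=P/I_{\mathbb{X}}$, $r_{\mathbb{X}}=\min\{i:\dim R_i=n\}$; given $L$ vanishing at no point, $\ell$ its class, $v_j$ the representative of $p_j$ with $L(v_j)=1$, $f(p_j)=f(v_j)$; separators $f_1,\dots,f_n\in R_{r_{\mathbb{X}}}$ with $f_i(p_j)=\delta_{ij}$; canonical ideal $\mathfrak{J}_{R/\mathbb{F}_q[\ell]}=\{\sum_i\varphi(f_i)f_i:\varphi\in\mathrm{Hom}_{\mathbb{F}_q[\ell]}(R,\mathbb{F}_q[\ell])\}$; $\widehat{\mathfrak{J}}_{\mathbb{X}}\subseteq P$ its preimage, so that $D_{\mathbb{X}}=P/\widehat{\mathfrak{J}}_{\mathbb{X}}$ (the doubling) is Artinian Gorenstein with top degree $2r_{\mathbb{X}}-1$. The graded dual $\mathcal{D}=\bigoplus_j\mathrm{Hom}_{\mathbb{F}_q}(P_j,\mathbb{F}_q)$ is a $P$-module via contraction $(f\circ\psi)(g)=\psi(fg)$; the Macaulay inverse system of an ideal $J$ is $J^\perp=\{\psi:f\circ\psi=0\ \forall f\in J\}$. A Macaulay inverse polynomial $\Phi_{\mathbb{X}}$ is an element of $\mathrm{Hom}_{\mathbb{F}_q}(P_{2r_{\mathbb{X}}-1},\mathbb{F}_q)$ generating $(\widehat{\mathfrak{J}}_{\mathbb{X}})^\perp$ as a $P$-module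 (unique up to a nonzero scalar). For $A\in\mathrm{GL}_k(\mathbb{F}_q)$, $\Lambda_A(p)=Ap$ on $\mathbb{P}^{k-1}$ and $\lambda_A:P\to P$ is the graded automorphism $\lambda_A(f)(v)=f(A^{-1}v)$. *)

(* Defs.v *)
From HB Require Import structures.
From mathcomp Require Import all_boot all_order all_algebra all_field.
From mathcomp Require Import mpoly.

Set Implicit Arguments.
Unset Strict Implicit.
Unset Printing Implicit Defensive.

Import Order.TTheory GRing.Theory.
Local Open Scope ring_scope.

Section Defs.
Variables (F : finFieldType) (k : nat).

Local Notation P := {mpoly F[k]}.

Definition ev (f : P) (v : 'cV[F]_k) : F := f.@[fun i => v i ord0].

Definition proj_eq (u v : 'cV[F]_k) : Prop := exists c : F, c != 0 /\ u = c *: v.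

(* X : 'I_n -> 'cV_k lists representatives of n distinct points of P^{k-1} *)
Definition distinct_points n (X : 'I_n -> 'cV[F]_k) : Prop :=
  (forall j, X j != 0) /\ (forall i j, proj_eq (X i) (X j) -> i = j).

Definition hcomp (d : nat) (f : P) : P :=
  \sum_(m <- msupp f | mdeg m == d) f@_m *: 'X_[m].

Definition inIX n (X : 'I_n -> 'cV[F]_k) (f : P) : Prop :=
  forall d j, ev (hcomp d f) (X j) = 0.

(* dim_F R_i = dim of the image of P_i -> F^n (evaluation at the points),
   computed as the rank of the span of the evaluation rows of the monomials
   of degree i *)
Definition evrow n (X : 'I_n -> 'cV[F]_k) (m : 'X_{1..k}) : 'rV[F]_n :=
  \row_j ev 'X_[m] (X j).
Definition dimR n (X : 'I_n -> 'cV[F]_k) (i : nat) : nat :=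
  \rank (\sum_(m : 'X_{1..k < i.+1} | mdeg m == i) <<evrow X m>>)%MS.

Definition is_regidx n (X : 'I_n -> 'cV[F]_k) (r : nat) : Prop :=
  dimR X r = n /\ (forall i, dimR X i = n -> (r <= i)%N).

Definition nrep (L : P) (v : 'cV[F]_k) : 'cV[F]_k := (ev L v)^-1 *: v.

(* lifts Fs i in P_r of the separators f_i in R_r: f_i(p_j) = delta_ij *)
Definition separators n (X : 'I_n -> 'cV[F]_k) (L : P) (r : nat)
  (Fs : 'I_n -> P) : Prop :=
  forall i, Fs i \is r.-homog /\
    forall j, ev (Fs i) (nrep L (X j)) = if i == j then 1 else 0.

(* F[l]-linear maps R -> F[l], with F[l] identified with F[T] (T |-> l),
   written as maps on P that vanish on I_X *)
Definition is_Fl_hom n (X : 'I_n -> 'cV[F]_k) (L : P) (psi : P -> {poly F}) :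
  Prop :=
  [/\ forall (a : F) f g, psi (a *: f + g) = a *: psi f + psi g,
      forall f, psi (L * f) = 'X * psi f
    & forall f, inIX X f -> psi f = 0].

Definition lift_poly (L : P) (p : {poly F}) : P :=
  (map_poly (fun c : F => c%:MP) p).[L].

(* preimage in P of the canonical ideal J_{R/F[l]} *)
Definition inJhat n (X : 'I_n -> 'cV[F]_k) (L : P) (r : nat) (h : P) : Prop :=
  exists Fs : 'I_n -> P, separators X L r Fs /\
  exists psi, is_Fl_hom X L psi /\
    inIX X (h - \sum_(i < n) lift_poly L (psi (Fs i)) * Fs i).

Definition is_lin (th : P -> F) : Prop :=
  forall (a : F) f g, th (a *: f + g) = a * th f + th g.

(* Hom_F(P_d, F), as functionals on P vanishing on the other components *)
Definition in_Hom_deg (d : nat) (th : P -> F) : Prop :=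
  is_lin th /\ forall f, th f = th (hcomp d f).

(* the graded dual D = (+)_j Hom_F(P_j, F) *)
Definition in_D (th : P -> F) : Prop :=
  is_lin th /\ exists N, forall f, th f = \sum_(d < N) th (hcomp d f).

(* Phi is a Macaulay inverse polynomial of X (built with L, r = r_X):
   Phi in Hom(P_{2r-1},F) and (Jhat)^perp = P o Phi, where
   (f o th)(g) = th(f g) *)
Definition macaulay_inv n (X : 'I_n -> 'cV[F]_k) (L : P) (r : nat)
  (Phi : P -> F) : Prop :=
  in_Hom_deg (2 * r).-1 Phi /\
  forall th, in_D th ->
    ((forall h, inJhat X L r h -> forall g, th (h * g) = 0) <->
     exists f : P, forall g, th g = Phi (f * g)).

(* lambda_A(f)(v) = f(A^-1 v) *)
Definition lamA (A : 'M[F]_k) (f : P) : P :=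
  f \mPo [tuple \sum_(j < k) (invmx A) i j *: ('X_j : P) | i < k].

Definition proj_image n (A : 'M[F]_k) (X X' : 'I_n -> 'cV[F]_k) : Prop :=
  (forall j, exists j', proj_eq (A *m X j) (X' j')) /\
  (forall j', exists j, proj_eq (A *m X j) (X' j')).

End Defs.

(* Main.v *)
Require Import Defs.
From HB Require Import structures.
From mathcomp Require Import all_boot all_order all_algebra all_field.
From mathcomp Require Import mpoly.
From mathcomp Require Import zify.
Set Implicit Arguments.
Unset Strict Implicit.
Unset Printing Implicit Defensive.
Import Order.TTheory GRing.Theory.
Local Open Scope ring_scope.
Section L.
Variables (F : finFieldType) (k : nat).
Local Notation P := {mpoly F[k]}.
Implicit Types (A : 'M[F]_k) (f g h : P) (v : 'cV[F]_k).

Definition tA (A : 'M[F]_k) : k.-tuple P :=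
  [tuple \sum_(j < k) (invmx A) i j *: ('X_j : P) | i < k].

Lemma lamAE A f : lamA A f = comp_mpoly (tA A) f.
Proof. by []. Qed.

Lemma hcompE d (f : P) : hcomp d f = pihomog mdeg d f.
Proof. by []. Qed.

Lemma ev_lam A f v : ev (lamA A f) v = ev f (invmx A *m v).
Proof.
rewrite /ev /lamA comp_mpoly_meval; apply: meval_eq => i.
rewrite tnth_map tnth_ord_tuple rmorph_sum mxE /=.
by apply: eq_bigr => j _; rewrite mevalZ mevalXU.
Qed.

Lemma tA_homog A i : tnth (tA A) i \is 1.-homog.
Proof.
rewrite tnth_map tnth_ord_tuple; apply: rpred_sum => j _; apply: rpredZ.
by rewrite dhomogX /= mdeg1.
Qed.

Lemma lam_homog A d f : f \is d.-homog -> lamA A f \is d.-homog.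
Proof.
move=> /dhomogP hf; rewrite lamAE comp_mpolyEX big_seq; apply: rpred_sum => m /hf /= <-.
apply: rpredZ; rewrite comp_mpolyX mdegE.
elim: (index_enum _) => [|i s ih]; first by rewrite !big_nil dhomog1.
rewrite !big_cons; apply: dhomogM => //.
have := dhomogMn (m i) (tA_homog A i); by rewrite mul1n.
Qed.

Lemma hcomp_homog d e (g : P) : g \is e.-homog -> hcomp d g = if e == d then g else 0.
Proof.
move=> hg; case: eqP => [<-|/eqP ne]; first exact: pihomog_dE.
exact: (pihomog_ne0 ne hg).
Qed.

Lemma hcomp_part (f : P) : f = \sum_(e < mmeasure mdeg f) hcomp e f.
Proof. exact: pihomog_partitionE. Qed.

Lemma hcomp_hom e (f : P) : hcomp e f \is e.-homog.
Proof. exact: pihomogP. Qed.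

Lemma lam_hcomp A d f : hcomp d (lamA A f) = lamA A (hcomp d f).
Proof.
have Hf := hcomp_part f; set N := mmeasure _ f in Hf.
pose E := \sum_(e < N) (if e == d :> nat then lamA A (hcomp e f) else 0).
transitivity E.
  rewrite {1}Hf lamAE raddf_sum /= hcompE raddf_sum /=.
  apply: eq_bigr => e _.
  by rewrite -lamAE -!hcompE (hcomp_homog d (lam_homog A (hcomp_hom e f))).
rewrite {1}Hf hcompE raddf_sum lamAE raddf_sum /=.
apply: eq_bigr => e _.
rewrite -hcompE (hcomp_homog d (hcomp_hom e f)); case: eqP => // _.
by rewrite raddf0.
Qed.

Lemma ev_scale d g (c : F) v : g \is d.-homog -> ev g (c *: v) = c ^+ d * ev g v.
Proof.
move=> /dhomogP hg; rewrite /ev {1 2}(mpolyE g) !raddf_sum mulr_sumr /= big_seq [RHS]big_seq.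
apply: eq_bigr => m /hg /= <-; rewrite !mevalZ !mevalX mulrCA; congr (_ * _).
rewrite mdegE -prodrXr -big_split /=; apply: eq_bigr => i _.
by rewrite mxE exprMn.
Qed.

Lemma lamM A f g : lamA A (f * g) = lamA A f * lamA A g.
Proof. by rewrite !lamAE rmorphM. Qed.
Lemma lamD A f g : lamA A (f + g) = lamA A f + lamA A g.
Proof. by rewrite !lamAE raddfD. Qed.
Lemma lamB A f g : lamA A (f - g) = lamA A f - lamA A g.
Proof. by rewrite !lamAE raddfB. Qed.
Lemma lamZ A c f : lamA A (c *: f) = c *: lamA A f.
Proof. by rewrite !lamAE comp_mpolyZ. Qed.
Lemma lamC A c : lamA A c%:MP = c%:MP.
Proof. by rewrite !lamAE comp_mpolyC. Qed.
Lemma lam0 A : lamA A 0 = 0.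
Proof. by rewrite !lamAE raddf0. Qed.
Lemma lam_sum A (I : finType) (G : I -> P) : lamA A (\sum_i G i) = \sum_i lamA A (G i).
Proof. by rewrite !lamAE raddf_sum. Qed.

Lemma lam_lift A L p : lamA A (lift_poly L p) = lift_poly (lamA A L) p.
Proof.
rewrite /lift_poly !horner_coef lam_sum; apply: eq_bigr => i _.
rewrite lamM !lamAE rmorphXn -!lamAE coef_map /= lamC; by [].
Qed.

Lemma lamX A i : lamA A 'X_i = \sum_(j < k) (invmx A) i j *: ('X_j : P).
Proof. by rewrite lamAE comp_mpolyXU -tnth_nth tnth_map tnth_ord_tuple. Qed.

Definition subst (M : 'M[F]_k) f : P :=
  f \mPo [tuple \sum_(j < k) M i j *: ('X_j : P) | i < k].

Lemma substX M i : subst M 'X_i = \sum_(j < k) M i j *: ('X_j : P).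
Proof. by rewrite /subst comp_mpolyXU -tnth_nth tnth_map tnth_ord_tuple. Qed.

Lemma substZ M c f : subst M (c *: f) = c *: subst M f.
Proof. exact: comp_mpolyZ. Qed.
Lemma subst_sumS M (s : seq 'X_{1..k}) (G : 'X_{1..k} -> P) :
  subst M (\sum_(m <- s) G m) = \sum_(m <- s) subst M (G m).
Proof. exact: raddf_sum. Qed.
Lemma subst_sumO M (G : 'I_k -> P) :
  subst M (\sum_(j < k) G j) = \sum_(j < k) subst M (G j).
Proof. exact: raddf_sum. Qed.
Lemma subst_prod M (G : 'I_k -> P) :
  subst M (\prod_(j < k) G j) = \prod_(j < k) subst M (G j).
Proof. exact: rmorph_prod. Qed.
Lemma substXn M g i : subst M (g ^+ i) = subst M g ^+ i.
Proof. exact: rmorphXn. Qed.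

Lemma subst_comp M1 M2 f : subst M2 (subst M1 f) = subst (M1 *m M2) f.
Proof.
rewrite {1 2}(mpolyE f) (subst_sumS M1) (subst_sumS (M1 *m M2)) (subst_sumS M2); apply: eq_bigr => m _.
rewrite !substZ; congr (_ *: _).
rewrite mpolyXE_id !subst_prod; apply: eq_bigr => i _.
rewrite !substXn; congr (_ ^+ _).
rewrite !substX subst_sumO.
under eq_bigr do rewrite substZ substX scaler_sumr.
rewrite exchange_big /=; apply: eq_bigr => l _.
by rewrite mxE scaler_suml; apply: eq_bigr => j _; rewrite scalerA.
Qed.

Lemma subst1 f : subst 1%:M f = f.
Proof.
rewrite /subst -[RHS]comp_mpoly_id; congr (_ \mPo _); apply: eq_from_tnth => i.
rewrite !tnth_map !tnth_ord_tuple (bigD1 i) //= mxE eqxx scale1r big1 ?addr0 //.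
by move=> j /negbTE ji; rewrite mxE eq_sym ji scale0r.
Qed.

Lemma lam_subst A f : lamA A f = subst (invmx A) f.
Proof. by []. Qed.

Lemma lam_inv A f : A \in unitmx -> lamA (invmx A) (lamA A f) = f.
Proof.
move=> uA; rewrite !lam_subst subst_comp invmxK mulVmx // subst1 //.
Qed.

Lemma lam_inv' A f : A \in unitmx -> lamA A (lamA (invmx A) f) = f.
Proof.
move=> uA; rewrite !lam_subst subst_comp invmxK mulmxV // subst1 //.
Qed.


Definition Smx n (X : 'I_n -> 'cV[F]_k) i :=
  (\sum_(m : 'X_{1..k < i.+1} | mdeg m == i) <<evrow X m>>)%MS.

Lemma dimRE n (X : 'I_n -> 'cV[F]_k) i : dimR X i = \rank (Smx X i).
Proof. by []. Qed.

Lemma row_in_S n (X : 'I_n -> 'cV[F]_k) i g : g \is i.-homog ->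
  (\row_j ev g (X j) <= Smx X i)%MS.
Proof.
move=> /dhomogP hg.
have -> : \row_j ev g (X j) = \sum_(m <- msupp g) g@_m *: evrow X m.
  apply/rowP => j; rewrite !mxE /ev {1}(mpolyE g) raddf_sum summxE /=.
  by apply: eq_bigr => m _; rewrite mevalZ !mxE.
rewrite big_seq; apply: summx_sub => m hm; apply: scalemx_sub.
have hd : (mdeg m < i.+1)%N by rewrite -(hg m hm) ltnSn.
apply: (sumsmx_sup (BMultinom hd)) => /=; first by rewrite (hg m hm).
by rewrite genmxE.
Qed.

Lemma dimR_le n (X X' : 'I_n -> 'cV[F]_k) A i :
  (forall j, exists j' (c : F), X j = invmx A *m (c *: X' j')) ->
  (dimR X i <= dimR X' i)%N.
Proof.
move=> H.
have H2 : forall j, exists p : 'I_n * F, X j = invmx A *m (p.2 *: X' p.1).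
  by move=> j; have [j' [c e]] := H j; exists (j', c).
have [tc Htc] := fin_all_exists H2.
pose M : 'M[F]_n := \matrix_(j', j) (if j' == (tc j).1 then (tc j).2 ^+ i else 0).
rewrite !dimRE; apply: leq_trans (mxrankM_maxl _ M); apply: mxrankS.
apply/sumsmx_subP => m /eqP hm; rewrite genmxE.
have -> : evrow X m = (\row_j' ev (lamA A 'X_[m]) (X' j')) *m M.
  apply/rowP => j; rewrite !mxE (bigD1 (tc j).1) //= !mxE eqxx big1 ?addr0; last first.
    by move=> j' /negbTE ne; rewrite !mxE ne mulr0.
  have hh : lamA A 'X_[m] \is i.-homog by apply: lam_homog; rewrite dhomogX /= hm.
  by rewrite Htc -ev_lam (ev_scale _ _ hh) mulrC.
apply: submxMr; apply: row_in_S; apply: lam_homog.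
by rewrite dhomogX /= hm.
Qed.

Lemma dimR_leN n (X : 'I_n -> 'cV[F]_k) i : (dimR X i <= n)%N.
Proof. exact: rank_leq_col. Qed.



Lemma lin0 (th : P -> F) : is_lin th -> th 0 = 0.
Proof.
move=> hl; have := hl 1 0 0; rewrite scaler0 addr0 mul1r.
by move=> /(congr1 (fun x => x - th 0)); rewrite subrr addrK.
Qed.

Lemma linZ (th : P -> F) c f : is_lin th -> th (c *: f) = c * th f.
Proof. by move=> hl; have := hl c f 0; rewrite addr0 (lin0 hl) addr0. Qed.

Lemma Hom_other e (th : P -> F) d f : in_Hom_deg e th -> d != e -> th (hcomp d f) = 0.
Proof.
move=> [hl hh] ne; rewrite hh (hcomp_homog e (hcomp_hom d f)) (negbTE ne).
exact: lin0.
Qed.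

Lemma Hom_D e (th : P -> F) : in_Hom_deg e th -> in_D th.
Proof.
move=> [hl hh]; split => //; exists e.+1 => f.
rewrite big_ord_recr /= big1 ?add0r -?hh // => d _.
by apply: (@Hom_other e th) => //; rewrite neq_ltn ltn_ord.
Qed.

Lemma Hom_lam e (th : P -> F) A : in_Hom_deg e th ->
  in_Hom_deg e (fun g => th (lamA A g)).
Proof.
move=> [hl hh]; split.
  by move=> a f g; rewrite lamD lamZ hl.
by move=> f; rewrite hh lam_hcomp.
Qed.

Lemma homog0_const g : g \is 0.-homog -> g = (g@_0)%:MP.
Proof.
move=> hg; apply/mpolyP => m; rewrite mcoeffC.
case: (eqVneq m 0%MM) => [->|ne]; first by rewrite mulr1.
rewrite mulr0; apply: (dhomog_nemf_coeff hg) => /=.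
by rewrite mdeg_eq0.
Qed.

Lemma hcomp_mul e f g : g \is e.-homog -> hcomp e (f * g) = hcomp 0 f * g.
Proof.
move=> hg; have := pihomog_partitionE (leqnSn (mmeasure mdeg f)).
move=> Hf; rewrite {1}Hf mulr_suml hcompE raddf_sum big_ord_recl /=.
rewrite -hcompE (hcomp_homog e (dhomogM (hcomp_hom 0 f) hg)) add0n eqxx.
rewrite big1 ?addr0 // => d _.
rewrite -hcompE (hcomp_homog e (dhomogM (hcomp_hom _ f) hg)).
by case: eqP => // H; exfalso; move: H; rewrite /bump /=; lia.
Qed.

Lemma ev0_hcomp f : ev f 0 = ev (hcomp 0 f) 0.
Proof.
rewrite {1}(pihomog_partitionE (leqnSn (mmeasure mdeg f))) /ev raddf_sum big_ord_recl /=.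
rewrite big1 ?addr0 // => d _.
have := ev_scale 0 0 (hcomp_hom (bump 0 d) f); rewrite scaler0 expr0n /= mul0r.
by [].
Qed.


Lemma inIX_lam n (X X' : 'I_n -> 'cV[F]_k) B f : B \in unitmx ->
  (forall j', exists j (c : F), X' j' = B *m (c *: X j)) ->
  inIX X f -> inIX X' (lamA B f).
Proof.
move=> uB H hf d j'; have [j [c ->]] := H j'.
rewrite lam_hcomp ev_lam mulmxA mulVmx // mul1mx (ev_scale _ _ (hcomp_hom d f)).
by rewrite hf mulr0.
Qed.

Lemma nrep_lam A L v w (c : F) : L \is 1.-homog -> c != 0 ->
  w = invmx A *m (c *: v) -> invmx A *m nrep (lamA A L) v = nrep L w.
Proof.
move=> hL nc ->; rewrite /nrep ev_lam -!scalemxAr (ev_scale _ _ hL) expr1.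
by rewrite scalerA invfM mulrAC mulVf // mul1r.
Qed.


Lemma Jhat_lam n (X X' : 'I_n -> 'cV[F]_k) A L r h (tau : 'I_n -> 'I_n)
  (cs : 'I_n -> F) (tauinj : injective tau) :
  A \in unitmx -> L \is 1.-homog ->
  (forall j, cs j != 0 /\ X j = invmx A *m (cs j *: X' (tau j))) ->
  (forall j', exists j (c : F), X' j' = A *m (c *: X j)) ->
  inJhat X L r h -> inJhat X' (lamA A L) r (lamA A h).
Proof.
move=> uA hL Htau H2 [Fs [hFs [psi [[h1 h2 h3] hI]]]].
have H1 : forall j, exists j' (c : F), X j = invmx A *m (c *: X' j').
  by move=> j; exists (tau j), (cs j); case: (Htau j).
have iinj : injective (invF tauinj) := can_inj (f_invF tauinj).
exists (fun i' => lamA A (Fs (invF tauinj i'))); split.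
  move=> i'; split; first by apply: lam_homog; case: (hFs (invF tauinj i')).
  move=> j'; rewrite ev_lam.
  have [nc Hj] := Htau (invF tauinj j').
  rewrite -{1}(f_invF tauinj j') (nrep_lam hL nc Hj).
  by case: (hFs (invF tauinj i')) => _ ->; rewrite (inj_eq iinj).
exists (fun f => psi (lamA (invmx A) f)); split.
  split.
  - by move=> a f g; rewrite lamD lamZ h1.
  - by move=> f; rewrite lamM lam_inv // h2.
  - move=> f hf; apply: h3; apply: (inIX_lam _ _ hf); first by rewrite unitmx_inv.
    exact: H1.
rewrite (reindex_inj tauinj) /=.
under eq_bigr do rewrite invF_f lam_inv //.
have -> : lamA A h - \sum_i lift_poly (lamA A L) (psi (Fs i)) * lamA A (Fs i) =
          lamA A (h - \sum_i lift_poly L (psi (Fs i)) * Fs i).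
  by rewrite lamB lam_sum; congr (_ - _); apply: eq_bigr => i _; rewrite lamM lam_lift.
exact: (inIX_lam uA H2 hI).
Qed.


Lemma evM f g v : ev (f * g) v = ev f v * ev g v.
Proof. exact: mevalM. Qed.
Lemma evD f g v : ev (f + g) v = ev f v + ev g v.
Proof. exact: mevalD. Qed.
Lemma ev_sum (I : finType) (G : I -> P) v : ev (\sum_i G i) v = \sum_i ev (G i) v.
Proof. exact: raddf_sum. Qed.

Lemma ev0_homog d g : g \is d.-homog -> (0 < d)%N -> ev g 0 = 0.
Proof.
move=> hg hd; have := ev_scale 0 0 hg; rewrite scaler0 expr0n /=.
by case: d hd hg => // d _ _; rewrite mul0r.
Qed.

Lemma ev_Jhat0 n (X : 'I_n -> 'cV[F]_k) L r h : (2 <= n)%N ->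
  inJhat X L r h -> ev h 0 = 0.
Proof.
move=> hn [Fs [hFs [psi [_ hI]]]].
have n0 : (0 < n)%N by apply: leq_trans hn.
have hF0 : forall i, ev (Fs i) 0 = 0.
  move=> i; case: (hFs i) => hh hv.
  case: (posnP r) => [r0|rpos]; last exact: (ev0_homog hh rpos).
  exfalso; rewrite r0 in hh.
  have cst : forall v, ev (Fs i) v = ev (Fs i) 0.
    by move=> v; have := ev_scale 0 v hh; rewrite scale0r expr0 mul1r.
  pose j0 : 'I_n := Ordinal n0; pose j1 : 'I_n := Ordinal hn.
  have := hv i; have := hv (if i == j0 then j1 else j0).
  have ne : i != (if i == j0 then j1 else j0).
    by case: (eqVneq i j0) => [->|//]; apply/eqP => /(congr1 val).
  by rewrite !cst eqxx (negbTE ne) => -> /eqP; rewrite eq_sym oner_eq0.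
set S := \sum_i _ in hI.
have -> : h = (h - S) + S by rewrite subrK.
rewrite evD ev0_hcomp.
have -> : ev (hcomp 0 (h - S)) 0 = ev (hcomp 0 (h - S)) (X (Ordinal n0)).
  by have := ev_scale 0 (X (Ordinal n0)) (hcomp_hom 0 (h - S)); rewrite scale0r expr0 mul1r.
rewrite hI add0r /S ev_sum big1 // => i _.
by rewrite evM hF0 mulr0.
Qed.

End L.

Theorem theorem7p7 (F : finFieldType) (k n : nat) (X X' : 'I_n -> 'cV[F]_k)
  (L L' : {mpoly F[k]}) (A : 'M[F]_k) (r r' : nat) (Phi Phi' : {mpoly F[k]} -> F) :
  (2 <= n)%N ->
  distinct_points X -> distinct_points X' ->
  L \is 1.-homog -> L' \is 1.-homog ->
  (forall j, ev L (X j) != 0) -> (forall j, ev L' (X' j) != 0) ->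
  is_regidx X r -> is_regidx X' r' ->
  macaulay_inv X L r Phi -> macaulay_inv X' L' r' Phi' ->
  A \in unitmx -> lamA A L = L' ->
  proj_image A X X' ->
  r = r' /\
  exists c : F, c != 0 /\
    forall g : {mpoly F[k]}, g \is (2 * r).-1.-homog -> Phi' (lamA A g) = c * Phi g.

Proof.
move=> hn dX dX' hL hL' _ _ [hr1 hr2] [hr1' hr2'] [hPhi hmac] [hPhi' hmac'] uA hLL' [pi1 pi2].
have F1 : forall j, exists j' (c : F), c != 0 /\ X j = invmx A *m (c *: X' j').
  move=> j; have [j' [c [nc e]]] := pi1 j; exists j', c; split => //.
  by rewrite -e mulmxA mulVmx // mul1mx.
have F2 : forall j', exists j (c : F), X' j' = A *m (c *: X j).
  move=> j'; have [j [c [nc e]]] := pi2 j'; exists j, c^-1.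
  by rewrite -scalemxAr e scalerA mulVf // scale1r.
have dle : forall i, (dimR X i <= dimR X' i)%N.
  move=> i; apply: (@dimR_le _ _ _ _ _ A) => j.
  by have [j' [c [_ e]]] := F1 j; exists j', c.
have dge : forall i, (dimR X' i <= dimR X i)%N.
  move=> i; apply: (@dimR_le _ _ _ _ _ (invmx A)) => j'.
  by rewrite invmxK; apply: F2.
have rr : r = r'.
  apply/eqP; rewrite eqn_leq; apply/andP; split.
  - apply: hr2; apply/eqP; rewrite eqn_leq dimR_leN /= -{1}hr1'; exact: dge.
  - apply: hr2'; apply/eqP; rewrite eqn_leq dimR_leN /= -{1}hr1; exact: dle.
subst r'.
have H2 : forall j, exists p : 'I_n * F, p.2 != 0 /\ X j = invmx A *m (p.2 *: X' p.1).
  by move=> j; have [j' [c e]] := F1 j; exists (j', c).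
have [tc Htc] := fin_all_exists H2.
have tauinj : injective (fun j => (tc j).1).
  move=> j1 j2 /= e; apply: (proj2 dX).
  have [n1 e1] := Htc j1; have [n2 e2] := Htc j2.
  exists ((tc j1).2 / (tc j2).2); split; first by rewrite mulf_eq0 negb_or n1 invr_eq0.
  by rewrite e1 e2 e -!scalemxAr scalerA mulfVK.
have hth : in_Hom_deg (2 * r).-1 (fun g => Phi' (lamA A g)) := Hom_lam A hPhi'.
have killJ' : forall h, inJhat X' L' r h -> forall g, Phi' (h * g) = 0.
  move=> h hh g; apply: (proj2 (hmac' Phi' (Hom_D hPhi'))) => //.
  by exists 1 => g'; rewrite mul1r.
have killJ : forall h, inJhat X L r h -> forall g, Phi' (lamA A (h * g)) = 0.
  move=> h hh g; rewrite lamM; apply: killJ'; rewrite -hLL'.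
  exact: (Jhat_lam (cs := fun j => (tc j).2) tauinj uA hL Htc F2 hh).
have [f hf] := (proj1 (hmac _ (Hom_D hth))) killJ.
pose c := (hcomp 0 f)@_0.
have key : forall g, g \is (2 * r).-1.-homog -> Phi' (lamA A g) = c * Phi g.
  move=> g hg; rewrite hf (proj2 hPhi) (hcomp_mul f hg).
  by rewrite {1}(homog0_const (hcomp_hom 0 f)) mul_mpolyC (linZ _ _ (proj1 hPhi)).
split => //; exists c; split => //.
apply/eqP => c0.
have Phi'0 : forall g, Phi' g = 0.
  move=> g; rewrite (proj2 hPhi') -[hcomp _ g](lam_inv' _ uA) key ?c0 ?mul0r //.
  by apply: lam_homog; apply: hcomp_hom.
pose th0 := fun g : {mpoly F[k]} => ev g 0.
have hth0 : in_D th0.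
  split; first by move=> a f1 g1; rewrite /th0 evD /ev mevalZ.
  by exists 1%N => g; rewrite big_ord1 /th0 ev0_hcomp.
have [|f0 hf0] := (proj1 (hmac' th0 hth0)).
  by move=> h hh g; rewrite /th0 evM (ev_Jhat0 hn hh) mul0r.
have := hf0 1; rewrite Phi'0 /th0 /ev meval1 => /eqP; by rewrite oner_eq0.
Qed.
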